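(* If $1 \leq i \neq j \leq r$, then for any $l \geq 1$ the graph $\mathcal{H}(V_i,V_j)$ contains no copy of $K_{2,2l^2 - l + 1}$.
   Context: Let $r \geq 2$ and $l \geq 1$ be integers and $q$ a power of an odd prime. Let $\alpha_1, \dots, \alpha_r$ be distinct elements of $\mathbb{F}_q$, and let $m_1, \dots, m_l$ be distinct elements of $\mathbb{F}_q^* = \mathbb{F}_q\setminus\{0\}$ such that $m_s(\alpha_k - \alpha_i) \neq m_t(\alpha_k - \alpha_j)$ whenever $1 \leq s,t \leq l$ and $i,j,k$ are distinct integers in $\{1,\dots,r\}$. For $1 \leq i \leq r$ let $V_i = \mathbb{F}_q \times \mathbb{F}_q \times \{i\}$. For $x,y \in \mathbb{F}_q$, $a \in \mathbb{F}_q^*$, $s \in \{1,\dots,l\}$ let \[ e(x,y,a,m_s) = \{(x + \alpha_i m_s a,\; y + \alpha_i m_s a^2,\; i) : 1 \leq i \leq r\}. \] $\mathcal{H}$ is the $r$-uniform hypergraph with vertex set $V_1 \cup \dots \cup V_r$ and edge set $\{e(x,y,a,m_s) : x,y \in \mathbb{F}_q,\ a \in \mathbb{F}_q^*,\ 1 \leq s \leq l\}$. For $i \neq j$, $\mathcal{H}(V_i,V_j)$ is the bipartite graph with parts $V_i$ and $V_j$ in which $u \in V_i$ and $w \in V_j$ are adjacent iff $\{u,w\} \subseteq e$ for some edge $e$ of $\mathcal{H}$. *)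

(* Defs.v *)
From HB Require Import structures.
From mathcomp Require Import all_boot all_order all_algebra all_field.
Set Implicit Arguments. Unset Strict Implicit. Unset Printing Implicit Defensive.
Import GRing.Theory.
Local Open Scope ring_scope.

(* Vertices of H: V_1 u ... u V_r  =  F_q x F_q x {1..r}  (indices 0-based as 'I_r). *)
Definition vtx (F : finFieldType) (r : nat) := (F * F * 'I_r)%type.

Definition hedge (F : finFieldType) (r l : nat) (alpha : 'I_r -> F) (m : 'I_l -> F)
  (x y a : F) (s : 'I_l) : {set vtx F r} :=
  [set (x + alpha k * m s * a, y + alpha k * m s * a ^+ 2, k) | k : 'I_r].

Definition Hadj_dir (F : finFieldType) (r l : nat) (alpha : 'I_r -> F) (m : 'I_l -> F)
  (i j : 'I_r) (u w : vtx F r) : bool :=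
  [&& u.2 == i, w.2 == j &
   [exists x : F, exists y : F, exists a : F, exists s : 'I_l,
      [&& a != 0, u \in hedge alpha m x y a s & w \in hedge alpha m x y a s]]].

Definition HVij (F : finFieldType) (r l : nat) (alpha : 'I_r -> F) (m : 'I_l -> F)
  (i j : 'I_r) (u w : vtx F r) : bool :=
  Hadj_dir alpha m i j u w || Hadj_dir alpha m i j w u.

Definition contains_K2t (T : finType) (G : rel T) (t : nat) : Prop :=
  exists u1 u2 : T, exists S : {set T},
    [/\ u1 != u2, #|S| = t, u1 \notin S, u2 \notin S &
        forall w, w \in S -> G u1 w && G u2 w].

(* Main.v *)
Require Import Defs.
From HB Require Import structures.
From mathcomp Require Import all_boot all_order all_algebra all_field.
From mathcomp Require Import zify ring.
Import GRing.Theory.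
Local Open Scope ring_scope.

Lemma two_neq0 (F : finFieldType) : odd #|F| -> (2 : F) != 0.
Proof.
move=> oF; apply/negP => /eqP h2.
have ch : (2%N \in [pchar F]) by rewrite inE /= h2 eqxx.
have := card_pprimeChar ch.
set n := logn _ _ => hc.
have hF : #|F| = (2^n)%N by rewrite -hc.
have := finNzRing_gt1 F; rewrite hF.
move: oF; rewrite hF; case: n {hc hF} => [|n] //=.
by rewrite expnS oddM.
Qed.

Lemma card_bigcup_le (T I : finType) (A : I -> {set T}) :
  (#|\bigcup_(i : I) A i| <= \sum_(i : I) #|A i|)%N.
Proof.
elim/big_rec2: _ => [|i n U _ IH]; first by rewrite cards0.
apply: leq_trans (leq_card_setU _ _) _; by rewrite leq_add2l.
Qed.

Lemma quad_diff {F : fieldType} {c e f a b : F} : c*a^+2+e*a+f = 0 -> c*b^+2+e*b+f=0 -> a != b -> c*(a+b)+e = 0.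
Proof.
move=> ha hb ab.
have H: (a - b) * (c*(a+b)+e) = (c*a^+2+e*a+f) - (c*b^+2+e*b+f) by ring.
move: H; rewrite ha hb subrr => /eqP; rewrite mulf_eq0 subr_eq0 (negbTE ab) /=.
by move/eqP.
Qed.

Lemma quad_card {F : finFieldType} {c e f : F} : ~~ [&& c == 0, e == 0 & f == 0] ->
  leq #|[set a : F | c*a^+2+e*a+f == 0]| (if c == 0 then 1%N else 2%N).
Proof.
move=> nz; case: eqVneq => [c0|c0].
  apply/card_le1_eqP => x y; rewrite !inE => /eqP hx /eqP hy.
  case: (eqVneq y x) => // nxy; exfalso.
  have : x != y by rewrite eq_sym.
  move/(quad_diff hx hy); rewrite c0 mul0r add0r => e0.
  move: hx; rewrite c0 e0 !mul0r !add0r => f0.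
  by move: nz; rewrite c0 e0 f0 !eqxx.
case: (set_0Vmem [set a | c*a^+2+e*a+f == 0]) => [->|[x xA]]; first by rewrite cards0.
rewrite (cardsD1 x) xA add1n ltnS.
apply/card_le1_eqP => y z; rewrite !inE => /andP[yx /eqP hy] /andP[zx /eqP hz].
move: xA; rewrite inE => /eqP hx.
have h1 := quad_diff hx hy (ltac:(by rewrite eq_sym)).
have h2 := quad_diff hx hz (ltac:(by rewrite eq_sym)).
have : c * (y - z) = (c*(x+y)+e) - (c*(x+z)+e) by ring.
rewrite h1 h2 subrr => /eqP; rewrite mulf_eq0 (negbTE c0) subr_eq0 /=.
by move/eqP.
Qed.
Lemma sum_bnd (l : nat) :
  (\sum_(st : 'I_l * 'I_l) (if st.1 == st.2 then 1 else 2))%N = (l * (1 + (l.-1 * 2)))%N.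
Proof.
rewrite -(pair_bigA _ (fun s t => if s == t then 1%N else 2%N)) /=.
transitivity (\sum_(s : 'I_l) (1 + (l.-1 * 2)))%N; last first.
  by rewrite sum_nat_const card_ord.
apply: eq_bigr => s _; rewrite (bigD1 s) //= eqxx; congr (_ + _)%N.
rewrite (eq_bigr (fun _ => 2%N)); last by move=> t ts; rewrite eq_sym (negbTE ts).
rewrite sum_nat_cond_const; congr (_ * _)%N.
have := cardsC1 s; rewrite card_ord => <-.
by apply: eq_card => t; rewrite !inE.
Qed.

Lemma arith (l : nat) : (0 < l)%N -> (l * (1 + l.-1 * 2) < 2 * l ^ 2 - l + 1)%N.
Proof.
case: l => // k _; rewrite succnK.
have h1 : (k.+1 * (1 + k*2) = 2*(k*k) + 3*k + 1)%N by ring.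
have h2 : (2 * k.+1 ^ 2 = 2*(k*k) + 4*k + 2)%N by ring.
rewrite h1 h2; move: (k*k)%N => q; lia.
Qed.

Lemma adjE (F : finFieldType) r l (alpha : 'I_r -> F) (m : 'I_l -> F) i j (u w : vtx F r) :
  HVij alpha m i j u w ->
  ((u.2 == i) && (w.2 == j) || (u.2 == j) && (w.2 == i)) /\
  exists s a, a != 0 /\ w.1.1 = u.1.1 + (alpha w.2 - alpha u.2) * m s * a /\
     w.1.2 = u.1.2 + (alpha w.2 - alpha u.2) * m s * a^+2.
Proof.
rewrite /HVij /Hadj_dir => /orP[] /and3P[/eqP e1 /eqP e2
  /existsP[x /existsP[y /existsP[a /existsP[s /and3P[a0 hu hw]]]]]];
  move: e1 e2 hu hw; rewrite /hedge => e1 e2 /imsetP[k _ hk] /imsetP[k' _ hk'];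
  rewrite hk hk' /= in e1 e2 *; rewrite e1 e2; (split; first by rewrite !eqxx ?orbT);
  exists s, a; (split; first by []); split; ring.
Qed.
Arguments adjE {F r l alpha m i j u w}.

Theorem lemma3p8 (F : finFieldType) (r l : nat)
  (alpha : 'I_r -> F) (m : 'I_l -> F) :
  odd #|F| ->
  (2 <= r)%N -> (1 <= l)%N ->
  injective alpha ->
  injective m ->
  (forall s : 'I_l, m s != 0) ->
  (forall (s t : 'I_l) (i j k : 'I_r), i != j -> j != k -> i != k ->
     m s * (alpha k - alpha i) != m t * (alpha k - alpha j)) ->
  forall i j : 'I_r, i != j ->
  ~ contains_K2t (HVij alpha m i j) (2 * l ^ 2 - l + 1)%N.
Proof.
move=> oF r2 l1 ainj minj m0 _ i j ij [[[x1 y1] k1] [[[x2 y2] k2] [S [u12 cS _ _ adj]]]].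
have two := @two_neq0 F oF.
have : (0 < #|S|)%N by rewrite cS addn1.
case/card_gt0P => w0 w0S.
pose P a b := (a == i) && (b == j) || (a == j) && (b == i).
have PL : forall a b c, P a b -> P c b -> a = c.
  move=> a b c; rewrite /P => /orP[]/andP[/eqP-> /eqP->] /orP[]/andP[/eqP h1 /eqP h2] //;
  by rewrite h2 eqxx in ij.
have PR : forall a b c, P a b -> P a c -> b = c.
  move=> a b c; rewrite /P => /orP[]/andP[/eqP-> /eqP->] /orP[]/andP[/eqP h1 /eqP h2] //;
  by rewrite h1 eqxx in ij.
have Pn : forall a b, P a b -> a != b.
  move=> a b; rewrite /P => /orP[]/andP[/eqP-> /eqP->] //; by rewrite eq_sym.
have /andP[a1 a2] := adj _ w0S.
have [P1 _] := adjE a1; have [P2 _] := adjE a2.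
move: P1 P2 => /= P1 P2.
have k21 : k2 = k1 := PL _ _ _ P2 P1.
subst k2.
set δ := alpha w0.2 - alpha k1.
have dnz : δ != 0.
  rewrite /δ subr_eq0; apply/negP => /eqP /ainj e.
  by move: (Pn _ _ P1); rewrite e eqxx.
pose Pd := x2 - x1. pose Qd := y2 - y1.
pose cc s t := δ^+2 * (m s * m t - m s ^+2).
pose ee (s : 'I_l) := 2 * δ * m s * Pd.
pose ff (t : 'I_l) := - (Pd^+2 + δ * m t * Qd).
pose R s t := [set a : F | cc s t * a^+2 + ee s * a + ff t == 0].
pose phi s a : vtx F r := (x1 + δ * m s * a, y1 + δ * m s * a^+2, w0.2).
have Sub : S \subset \bigcup_(st : 'I_l * 'I_l) [set phi st.1 a | a in R st.1 st.2].
  apply/subsetP => -[[X Y] K] wS.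
  have/andP[h1 h2] := adj _ wS.
  have [Pw1 [s [a [a0 [e1 e2]]]]] := adjE h1.
  have [Pw2 [t [b [b0 [e3 e4]]]]] := adjE h2.
  move: Pw1 e1 e2 e3 e4 => /= Pw1 e1 e2 e3 e4.
  have ew : w0.2 = K := PR _ _ _ P1 Pw1.
  rewrite -ew -/δ in e1 e2 e3 e4.
  apply/bigcupP; exists (s, t) => //=; apply/imsetP; exists a; last first.
    by rewrite /phi e1 e2 ew.
  have ex1 : x1 = X - δ * m s * a by rewrite e1 addrK.
  have ex2 : y1 = Y - δ * m s * a^+2 by rewrite e2 addrK.
  have ex3 : x2 = X - δ * m t * b by rewrite e3 addrK.
  have ex4 : y2 = Y - δ * m t * b^+2 by rewrite e4 addrK.
  rewrite inE /cc /ee /ff /Pd /Qd ex1 ex2 ex3 ex4; apply/eqP; ring.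
have nondeg : forall s t, ~~ [&& cc s t == 0, ee s == 0 & ff t == 0].
  move=> s t; apply/negP => /and3P[_ /eqP he /eqP hf].
  move/eqP: he; rewrite /ee !mulf_eq0 (negbTE two) (negbTE dnz) (negbTE (m0 s)) /=.
  rewrite subr_eq0 => /eqP ex.
  have : δ * m t * Qd = - (- (Pd^+2 + δ * m t * Qd)) - Pd^+2 by ring.
  rewrite -/(ff t) hf oppr0 sub0r /Pd ex subrr expr2 mulr0 oppr0 => /eqP.
  rewrite !mulf_eq0 (negbTE dnz) (negbTE (m0 t)) /= subr_eq0 => /eqP ey.
  by rewrite ex ey eqxx in u12.
have bnd : forall st : 'I_l * 'I_l, (#|R st.1 st.2| <= if st.1 == st.2 then 1 else 2)%N.
  move=> [s t] /=; rewrite /R; apply: leq_trans (quad_card (nondeg s t)) _.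
  case: (eqVneq s t) => [<-|_].
    have -> : cc s s = 0 by rewrite /cc; ring.
    by rewrite eqxx.
  by case: ifP.
have H2 : (#|S| <= \sum_(st : 'I_l * 'I_l) (if st.1 == st.2 then 1 else 2))%N.
  apply: leq_trans (subset_leq_card Sub) _.
  apply: leq_trans (card_bigcup_le _ _ _) _.
  apply: leq_sum => st _; exact: leq_trans (leq_imset_card _ _) (bnd st).
move: H2; rewrite cS sum_bnd => H2.
by have := leq_trans (arith _ l1) H2; rewrite ltnn.
Qed.
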